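(* There is $d_0$ such that for all $d\ge d_0$, $A_{d,2d}\big(t\mapsto\psi_{3d}(\sqrt d\,t)\big)\ge\frac{1}{5e\pi}$.
   Context: $\mu_d$ is the probability measure on $[-1,1]$ with density $\frac{\Gamma(d/2)}{\sqrt\pi\,\Gamma((d-1)/2)}(1-t^2)^{(d-3)/2}$. $A_{d,n}(g)=\min_p\|g-p\|_{L^2(\mu_d)}$ over polynomials $p$ of degree less than $n$. The sawtooth $\psi_n:\mathbb{R}\to[-1,1]$ is $\psi_n(t)=-2n[t+1]_++2n[t-1]_++4n\sum_{j=1}^n\big((-1)^{j+n+1}[t-\tfrac{2j-1}{2n}]_++(-1)^{j+n}[t+\tfrac{2j-1}{2n}]_+\big)$ ($n$ cycles in $[-1,1]$, zero outside). *)

(* Defs.v *)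
From Stdlib Require Import Reals.
From Coquelicot Require Import Coquelicot.
Open Scope R_scope.

Definition Gamma (s : R) : R :=
  RInt_gen (fun x => Rpower x (s - 1) * exp (- x)) (at_point 0) (Rbar_locally p_infty).

Definition mu_density (d : nat) (t : R) : R :=
  Gamma (INR d / 2) / (sqrt PI * Gamma ((INR d - 1) / 2))
  * Rpower (1 - t ^ 2) ((INR d - 3) / 2).

Definition L2norm (d : nat) (f : R -> R) : R :=
  sqrt (RInt (fun t => (f t) ^ 2 * mu_density d t) (-1) 1).

Fixpoint peval (c : nat -> R) (n : nat) (t : R) : R :=
  match n with
  | O => 0
  | S m => peval c m t + c m * t ^ m
  end.

(* A_{d,n}(g) = min over polynomials p of degree < n of ||g - p||_{L^2(mu_d)}
   (taken as the infimum; the minimum is attained). *)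
Definition A (d n : nat) (g : R -> R) : Rbar :=
  Glb_Rbar (fun r => exists c : nat -> R, r = L2norm d (fun t => g t - peval c n t)).

Definition relu (x : R) : R := Rmax 0 x.

Fixpoint sum1 (f : nat -> R) (n : nat) : R :=
  match n with
  | O => 0
  | S m => sum1 f m + f (S m)
  end.

Definition psi (n : nat) (t : R) : R :=
  - 2 * INR n * relu (t + 1) + 2 * INR n * relu (t - 1)
  + 4 * INR n * sum1 (fun j =>
        (-1) ^ (j + n + 1) * relu (t - (2 * INR j - 1) / (2 * INR n))
      + (-1) ^ (j + n) * relu (t + (2 * INR j - 1) / (2 * INR n))) n.

(* Main.v *)
Require Import Defs.
From Stdlib Require Import Reals.
From Coquelicot Require Import Coquelicot.
From Stdlib Require Import Lra Lia List Classical ClassicalDescription.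
Open Scope R_scope.

Lemma sum1_plus f g n : sum1 (fun j => f j + g j) n = sum1 f n + sum1 g n.
Proof. induction n; simpl; [lra| rewrite IHn; lra]. Qed.
Lemma sum1_scal c f n : sum1 (fun j => c * f j) n = c * sum1 f n.
Proof. induction n; simpl; [lra| rewrite IHn; lra]. Qed.
Lemma sum1_ext f g n : (forall j, (1 <= j <= n)%nat -> f j = g j) -> sum1 f n = sum1 g n.
Proof. induction n; intros H; simpl; [lra|]. rewrite IHn; [| intros; apply H; lia]. rewrite H; [lra|lia]. Qed.
Lemma sum1_trunc f m n : (m <= n)%nat ->
  sum1 (fun j => if (j <=? m)%nat then f j else 0) n = sum1 f m.
Proof.
  induction n; intros H.
  - assert (m = 0%nat) by lia; subst; reflexivity.
  - destruct (Nat.eq_dec m (S n)) as [->|Hne].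
    + apply sum1_ext. intros j Hj. destruct (Nat.leb_spec j (S n)); [reflexivity| lia].
    + cbn [sum1]. rewrite IHn by lia. destruct (Nat.leb_spec (S n) m); [lia| lra].
Qed.
Lemma alt0 k : sum1 (fun j => (-1)^j) k = ((-1)^k - 1)/2.
Proof. induction k; simpl; [lra|]. rewrite IHk. lra. Qed.
Lemma alt1 k : sum1 (fun j => (-1)^j * (2 * INR j - 1)) k = (-1)^k * INR k.
Proof. induction k; cbn [sum1]; [simpl; lra|]. rewrite IHk. rewrite S_INR. cbn [pow]. ring. Qed.

Lemma relu_pos x : 0 <= x -> relu x = x.
Proof. intros; unfold relu; rewrite Rmax_right; lra. Qed.
Lemma relu_neg x : x <= 0 -> relu x = 0.
Proof. intros; unfold relu; rewrite Rmax_left; lra. Qed.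

Lemma pow_m1_sq n : (-1)^n * (-1)^n = 1.
Proof. rewrite <- pow_add. replace (n+n)%nat with (2*n)%nat by lia. rewrite pow_1_even. reflexivity. Qed.

Lemma psi_formula n m y : (1 <= n)%nat -> (m <= n)%nat -> 0 <= y <= 1 ->
  (2 * INR m - 1) / 2 <= INR n * y <= (2 * INR m + 1) / 2 ->
  psi n y = (-1)^(m+n) * (2 * (INR m - INR n * y)).
Proof.
  intros Hn Hm Hy Hmy.
  assert (HN : 1 <= INR n) by (apply (le_INR 1); lia).
  unfold psi.
  rewrite (relu_pos (y+1)) by lra. rewrite (relu_neg (y-1)) by lra.
  set (N := INR n) in *.
  set (u := (-1)^n).
  rewrite (sum1_ext _ (fun j => (u * ((-1)^j * (y + (2 * INR j - 1)/(2*N))))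
     + (if (j <=? m)%nat then (- u) * ((-1)^j * (y - (2 * INR j - 1)/(2*N))) else 0)) n).
  2:{ intros j Hj. assert (Hj1 : 1 <= INR j) by (apply (le_INR 1); lia).
      assert (HjN : INR j <= N) by (apply le_INR; lia).
      rewrite (relu_pos (y + _)).
      2:{ apply Rplus_le_le_0_compat; [lra|]. apply Rmult_le_pos; [lra|]. left; apply Rinv_0_lt_compat; lra. }
      replace ((-1)^(j+n+1)) with (- u * (-1)^j) by (unfold u; rewrite !pow_add; simpl; ring).
      replace ((-1)^(j+n)) with (u * (-1)^j) by (unfold u; rewrite !pow_add; simpl; ring).
      destruct (Nat.leb_spec j m).
      - rewrite relu_pos. ring.
        assert (INR j <= INR m) by (apply le_INR; lia).
        enough (HH: (2*INR j - 1)/(2*N) <= y) by lra. apply (Rmult_le_reg_l N); [lra|]. unfold Rdiv.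
        replace (N * ((2 * INR j - 1) * / (2 * N))) with ((2 * INR j - 1)/2) by (field; lra). lra.
      - rewrite relu_neg. ring.
        assert (INR m + 1 <= INR j) by (rewrite <- S_INR; apply le_INR; lia).
        enough (HH: y <= (2*INR j - 1)/(2*N)) by lra. apply (Rmult_le_reg_l N); [lra|]. unfold Rdiv.
        replace (N * ((2 * INR j - 1) * / (2 * N))) with ((2 * INR j - 1)/2) by (field; lra). lra. }
  rewrite sum1_plus. rewrite sum1_trunc by exact Hm.
  rewrite !sum1_scal.
  rewrite (sum1_ext _ (fun j => y * (-1)^j + (1/(2*N)) * ((-1)^j * (2 * INR j - 1))) n)
    by (intros; field; lra).
  rewrite (sum1_ext (fun j => (-1)^j * (y - _)) (fun j => y * (-1)^j + (-1/(2*N)) * ((-1)^j * (2 * INR j - 1))) m)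
    by (intros; field; lra).
  rewrite !sum1_plus, !sum1_scal, !alt0, !alt1.
  rewrite pow_add. fold u. set (v := (-1)^m).
  assert (Huu : u * u = 1) by apply pow_m1_sq.
  fold N.
  apply Rminus_diag_uniq.
  transitivity ((u*u - 1) * (2 * N * y + 2 * N)).
  - field. lra.
  - rewrite Huu. ring.
Qed.

Lemma cont_plus (f g : R -> R) x : continuous f x -> continuous g x -> continuous (fun t => f t + g t) x.
Proof. intros. apply (continuous_plus f g); auto. Qed.
Lemma cont_mult (f g : R -> R) x : continuous f x -> continuous g x -> continuous (fun t => f t * g t) x.
Proof. intros. apply (continuous_mult f g); auto. Qed.
Lemma cont_const (c : R) x : continuous (fun _ : R => c) x.
Proof. apply continuous_const. Qed.
Lemma cont_id x : continuous (fun t : R => t) x.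
Proof. apply continuous_id. Qed.
Lemma cont_comp (f g : R -> R) x : continuous f x -> continuous g (f x) -> continuous (fun t => g (f t)) x.
Proof. intros. apply (continuous_comp f g); auto. Qed.

Lemma relu_cont x : continuous relu x.
Proof.
  apply (continuous_ext (fun t => (t + Rabs t) / 2)).
  - intro t. unfold relu, Rmax. destruct (Rle_dec 0 t); [rewrite Rabs_pos_eq by lra| rewrite Rabs_left by lra]; lra.
  - apply cont_mult; [| apply cont_const]. apply cont_plus; [apply cont_id| apply continuous_Rabs].
Qed.

Lemma sum1_cont (F : nat -> R -> R) n x : (forall j, continuous (F j) x) ->
  continuous (fun t => sum1 (fun j => F j t) n) x.
Proof.
  intros H. induction n; simpl.
  - apply cont_const.
  - apply cont_plus; auto.
Qed.

Lemma relu_comp_cont (f : R -> R) x : continuous f x -> continuous (fun t => relu (f t)) x.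
Proof. intros; apply cont_comp; auto; apply relu_cont. Qed.

Lemma psi_cont n x : continuous (psi n) x.
Proof.
  unfold psi. repeat apply cont_plus.
  - apply cont_mult; [apply cont_const|]. apply relu_comp_cont, cont_plus; [apply cont_id|apply cont_const].
  - apply cont_mult; [apply cont_const|]. apply relu_comp_cont, cont_plus; [apply cont_id|apply cont_const].
  - apply cont_mult; [apply cont_const|]. apply (sum1_cont (fun j t => (-1) ^ (j + n + 1) * relu (t - (2 * INR j - 1) / (2 * INR n)) +
   (-1) ^ (j + n) * relu (t + (2 * INR j - 1) / (2 * INR n)))).
    intro j. apply cont_plus; apply cont_mult; try apply cont_const; apply relu_comp_cont, cont_plus; try apply cont_id; apply cont_const.
Qed.

Lemma pow_cont k x : continuous (fun t => t ^ k) x.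
Proof. induction k; simpl. apply cont_const. apply cont_mult; auto; apply cont_id. Qed.

Lemma peval_cont c n x : continuous (peval c n) x.
Proof. induction n; simpl. apply cont_const. apply cont_plus; auto. apply cont_mult; [apply cont_const| apply pow_cont]. Qed.

Definition dc (c : nat -> R) (k : nat) : R := INR (S k) * c (S k).

Lemma peval_derive c m t : is_derive (peval c (S m)) t (peval (dc c) m t).
Proof.
  induction m.
  - apply is_derive_Reals. simpl. apply (derivable_pt_lim_const (0 + c O * 1)).
  - change (peval c (S (S m))) with (fun t => peval c (S m) t + c (S m) * t ^ (S m)).
    change (peval (dc c) (S m) t) with (peval (dc c) m t + dc c m * t ^ m).
    apply (is_derive_plus (peval c (S m)) (fun t => c (S m) * t ^ S m)); [exact IHm|].
    apply is_derive_Reals.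
    replace (dc c m * t ^ m) with (c (S m) * (INR (S m) * t ^ (Nat.pred (S m)))) by (unfold dc; simpl; ring).
    apply derivable_pt_lim_scal. apply derivable_pt_lim_pow.
Qed.

Fixpoint decr (l : list R) : Prop :=
  match l with nil => True | x :: l' => (forall y, In y l' -> y < x) /\ decr l' end.

Lemma mvt_zero (f f' : R -> R) a b : (forall x, is_derive f x (f' x)) -> a < b -> f a = 0 -> f b = 0 ->
  exists c, a < c < b /\ f' c = 0.
Proof.
  intros Hd Hab Ha Hb.
  destruct (MVT_cor2 f f' a b Hab) as [c [Hc1 Hc2]].
  { intros; apply is_derive_Reals; apply Hd. }
  exists c; split; [exact Hc2|].
  rewrite Ha, Hb in Hc1.
  assert (f' c * (b - a) = 0) by lra.
  apply Rmult_integral in H as [H|H]; [exact H| lra].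
Qed.

Lemma rolle_list (f f' : R -> R) (Hd : forall x, is_derive f x (f' x)) : forall l x,
  decr (x :: l) -> (forall y, In y (x :: l) -> f y = 0) ->
  exists l', decr l' /\ length l' = length l /\ (forall y, In y l' -> f' y = 0) /\ (forall y, In y l' -> y < x).
Proof.
  induction l as [|z l IH]; intros x Hdec Hr.
  - exists nil. simpl. repeat split; tauto.
  - destruct Hdec as [Hx Hdec].
    destruct (IH z Hdec) as [l'' [H1 [H2 [H3 H4]]]].
    { intros y Hy; apply Hr; right; exact Hy. }
    assert (Hzx : z < x) by (apply Hx; left; reflexivity).
    destruct (mvt_zero f f' z x Hd Hzx) as [c [Hc Hc0]].
    { apply Hr; right; left; reflexivity. } { apply Hr; left; reflexivity. }
    exists (c :: l''). simpl. split; [split|split; [|split]].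
    + intros y Hy. specialize (H4 y Hy). lra.
    + exact H1.
    + rewrite H2; reflexivity.
    + intros y [<-|Hy]; [exact Hc0| apply H3; exact Hy].
    + intros y [<-|Hy]; [lra|]. specialize (H4 y Hy). lra.
Qed.

Lemma deriv0_const (f : R -> R) : (forall x, is_derive f x 0) -> forall a b, f a = f b.
Proof.
  intros Hd a b.
  destruct (Rtotal_order a b) as [H|[H|H]].
  - destruct (MVT_cor2 f (fun _ => 0) a b H) as [c [Hc _]].
    { intros; apply is_derive_Reals; apply Hd. } lra.
  - subst; reflexivity.
  - destruct (MVT_cor2 f (fun _ => 0) b a H) as [c [Hc _]].
    { intros; apply is_derive_Reals; apply Hd. } lra.
Qed.

Lemma poly_roots m : forall c l, decr l -> (forall y, In y l -> peval c m y = 0) ->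
  (m <= length l)%nat -> forall t, peval c m t = 0.
Proof.
  induction m as [|m IH]; intros c l Hdec Hr Hlen t.
  - reflexivity.
  - destruct l as [|x l]; [simpl in Hlen; lia|].
    destruct (rolle_list (peval c (S m)) (peval (dc c) m) (peval_derive c m) l x Hdec Hr)
      as [l' [H1 [H2 [H3 _]]]].
    assert (Hz : forall y, peval (dc c) m y = 0).
    { intro y. apply (IH (dc c) l' H1 H3). rewrite H2. simpl in Hlen. lia. }
    rewrite (deriv0_const (peval c (S m))) with (b := x).
    + apply Hr; left; reflexivity.
    + intro y. rewrite <- (Hz y). apply peval_derive.
Qed.



Definition badp (p : R -> R) (lo hi sg : nat -> R) (j : nat) : Prop :=
  forall t, lo j <= t <= hi j -> sg j * p t <= 0.

Fixpoint bc (P : nat -> Prop) (i : nat) : nat :=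
  match i with
  | O => O
  | S k => (bc P k + if excluded_middle_informative (P (S k)) then 1 else 0)%nat
  end.

Lemma lohi_mono (lo hi : nat -> R) : (forall j, lo j <= hi j) -> (forall j, hi j < lo (S j)) ->
  forall l j, (l < j)%nat -> hi l < lo j.
Proof.
  intros H1 H2 l j Hlj. induction Hlj.
  - apply H2.
  - specialize (H1 m). specialize (H2 m). lra.
Qed.

Lemma comb (p : R -> R) (Hp : forall x, continuous p x) (D N : nat) (lo hi sg : nat -> R)
  (Hlh : forall j, lo j <= hi j) (Hhl : forall j, hi j < lo (S j))
  (Hsg : forall j, sg (S j) = - sg j) (Hsg1 : forall j, sg j = 1 \/ sg j = -1)
  (Hroot : forall l, decr l -> (forall y, In y l -> p y = 0) -> (exists x, p x <> 0) -> (length l <= D)%nat) :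
  (N <= 2 * bc (badp p lo hi sg) N + D + 1)%nat.
Proof.
  set (B := badp p lo hi sg).
  assert (Inv : forall i, bc B i = i \/ exists l0 x l, (1 <= l0 <= i)%nat /\ lo l0 <= x <= hi l0 /\
     sg l0 * p x > 0 /\ decr l /\ (forall y, In y l -> p y = 0) /\ (forall y, In y l -> y < x) /\
     (2 * i <= length l + 2 * bc B i + l0 + 1)%nat).
  { induction i as [|i IH].
    - left; reflexivity.
    - simpl bc. destruct (excluded_middle_informative (B (S i))) as [Hb|Hb].
      + destruct IH as [IH|[l0 [x [l [H1 [H2 [H3 [H4 [H5 [H6 H7]]]]]]]]]].
        * left; lia.
        * right; exists l0, x, l; repeat split; try tauto; try lra; lia.
      + assert (Hg : exists x', lo (S i) <= x' <= hi (S i) /\ sg (S i) * p x' > 0).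
        { apply NNPP; intro Hn; apply Hb; intros t Ht.
          apply Rnot_lt_le; intro Hlt; apply Hn; exists t; split; auto. }
        destruct Hg as [x' [Hx' Hpx']].
        rewrite Nat.add_0_r.
        destruct IH as [IH|[l0 [x [l [H1 [H2 [H3 [H4 [H5 [H6 H7]]]]]]]]]].
        * right; exists (S i), x', nil; simpl; repeat split; try tauto; try lra; try lia.
        * right.
          assert (Hxx : x < x').
          { assert (hi l0 < lo (S i)) by (apply (lohi_mono lo hi Hlh Hhl); lia). lra. }
          destruct (Hsg1 l0) as [E|E]; destruct (Hsg1 (S i)) as [E'|E'].
          --
             assert (l0 <> i). { intro; subst. rewrite Hsg in E'. lra. }
             exists (S i), x', l; repeat split; try tauto; try lra; try lia.
             intros y Hy; specialize (H6 y Hy); lra.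
          --
             destruct (IVT_gen_consistent p x x' 0 Hp) as [z [Hz Hz0]].
             { rewrite E in H3; rewrite E' in Hpx'. unfold Rmin, Rmax; destruct Rle_dec; lra. }
             rewrite Rmin_left in Hz by lra. rewrite Rmax_right in Hz by lra.
             assert (x < z). { destruct (Req_dec x z) as [h|h]; [rewrite <- h in Hz0; rewrite E in H3; lra| lra]. }
             assert (z < x'). { destruct (Req_dec z x') as [h|h]; [rewrite h in Hz0; rewrite E' in Hpx'; lra| lra]. }
             exists (S i), x', (z :: l); simpl; repeat split; try tauto; try lra; try lia.
             ++ intros y Hy; specialize (H6 y Hy); lra.
             ++ intros y [<-|Hy]; auto.
             ++ intros y [<-|Hy]; auto. specialize (H6 y Hy); lra.
          -- destruct (IVT_gen_consistent p x x' 0 Hp) as [z [Hz Hz0]].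
             { rewrite E in H3; rewrite E' in Hpx'. unfold Rmin, Rmax; destruct Rle_dec; lra. }
             rewrite Rmin_left in Hz by lra. rewrite Rmax_right in Hz by lra.
             assert (x < z). { destruct (Req_dec x z) as [h|h]; [rewrite <- h in Hz0; rewrite E in H3; lra| lra]. }
             assert (z < x'). { destruct (Req_dec z x') as [h|h]; [rewrite h in Hz0; rewrite E' in Hpx'; lra| lra]. }
             exists (S i), x', (z :: l); simpl; repeat split; try tauto; try lra; try lia.
             ++ intros y Hy; specialize (H6 y Hy); lra.
             ++ intros y [<-|Hy]; auto.
             ++ intros y [<-|Hy]; auto. specialize (H6 y Hy); lra.
          -- assert (l0 <> i). { intro; subst. rewrite Hsg in E'. lra. }
             exists (S i), x', l; repeat split; try tauto; try lra; try lia.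
             intros y Hy; specialize (H6 y Hy); lra. }
  destruct (Inv N) as [H|[l0 [x [l [H1 [H2 [H3 [H4 [H5 [H6 H7]]]]]]]]]].
  - fold B. lia.
  - assert (length l <= D)%nat. { apply Hroot; auto. exists x. intro Hx. rewrite Hx in H3. lra. }
    fold B. lia.
Qed.

Definition rp (a u : R) : R := if Rlt_dec 0 u then Rpower u a else 0.

Lemma rp_pos_eq a u : 0 < u -> rp a u = Rpower u a.
Proof. intros H; unfold rp; destruct (Rlt_dec 0 u); [reflexivity| lra]. Qed.
Lemma rp_npos a u : u <= 0 -> rp a u = 0.
Proof. intros H; unfold rp; destruct (Rlt_dec 0 u); [lra| reflexivity]. Qed.
Lemma Rpower_pos' u a : 0 < Rpower u a.
Proof. unfold Rpower; apply exp_pos. Qed.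
Lemma rp_nonneg a u : 0 <= rp a u.
Proof. unfold rp; destruct (Rlt_dec 0 u); [left; apply Rpower_pos'| lra]. Qed.

Lemma Rpower_lt_base a u v : 0 < a -> 0 < u -> u < v -> Rpower u a < Rpower v a.
Proof.
  intros Ha Hu Huv. unfold Rpower. apply exp_increasing.
  apply Rmult_lt_compat_l; [exact Ha|]. apply ln_increasing; lra.
Qed.
Lemma Rpower_le_base a u v : 0 <= a -> 0 < u -> u <= v -> Rpower u a <= Rpower v a.
Proof.
  intros Ha Hu Huv. unfold Rpower. destruct (Req_dec u v) as [->|]; [lra|].
  destruct (Req_dec a 0) as [->|]; [rewrite !Rmult_0_l; lra|].
  left; apply Rpower_lt_base; lra.
Qed.

Lemma locally_R (u : R) (P : R -> Prop) (e : R) : 0 < e ->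
  (forall y, Rabs (y - u) < e -> P y) -> locally u P.
Proof. intros He H. exists (mkposreal e He). intros y Hy. apply H. exact Hy. Qed.

Lemma Rpower_cont a u : 0 < u -> continuous (fun y => Rpower y a) u.
Proof.
  intros Hu. apply continuity_pt_filterlim. apply derivable_continuous_pt.
  exists (a * Rpower u (a - 1)). apply derivable_pt_lim_power. exact Hu.
Qed.

Lemma rp_small a (Ha : 0 < a) : forall eps, 0 < eps -> exists del, 0 < del /\
  forall h, Rabs h < del -> Rabs (rp a h) < eps.
Proof.
  intros eps Heps. exists (Rpower eps (/ a)). split; [apply Rpower_pos'|].
  intros h Hh. unfold rp. destruct (Rlt_dec 0 h) as [Hh0|Hh0].
  - rewrite Rabs_pos_eq by (left; apply Rpower_pos').
    rewrite Rabs_pos_eq in Hh by lra.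
    replace eps with (Rpower (Rpower eps (/ a)) a).
    + apply Rpower_lt_base; auto.
    + rewrite Rpower_mult. rewrite Rinv_l by lra. apply Rpower_1; exact Heps.
  - rewrite Rabs_R0; exact Heps.
Qed.

Lemma rp_cont a u : 0 < a -> continuous (rp a) u.
Proof.
  intros Ha.
  destruct (Rtotal_order u 0) as [Hu|[Hu|Hu]].
  - apply (continuous_ext_loc _ (fun _ => 0)).
    + apply (locally_R u _ (- u)); [lra|]. intros y Hy.
      apply Rabs_def2 in Hy. rewrite rp_npos by lra. reflexivity.
    + apply continuous_const.
  - subst. apply continuity_pt_filterlim.
    intros eps Heps. destruct (rp_small a Ha eps Heps) as [del [Hdel H]].
    exists del; split; [exact Hdel|]. intros x [_ Hx].
    simpl in *. unfold R_dist in *. rewrite (rp_npos a 0) by lra. rewrite Rminus_0_r in *. apply H. exact Hx.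
  - apply (continuous_ext_loc _ (fun y => Rpower y a)).
    + apply (locally_R u _ u); [lra|]. intros y Hy.
      apply Rabs_def2 in Hy. rewrite rp_pos_eq by lra. reflexivity.
    + apply Rpower_cont; exact Hu.
Qed.

Lemma rp_derive s u : 1 < s -> is_derive (rp s) u (s * rp (s - 1) u).
Proof.
  intros Hs.
  destruct (Rtotal_order u 0) as [Hu|[Hu|Hu]].
  - rewrite rp_npos by lra. rewrite Rmult_0_r.
    apply (is_derive_ext_loc (fun _ => 0)).
    + apply (locally_R u _ (- u)); [lra|]. intros y Hy.
      apply Rabs_def2 in Hy. rewrite rp_npos by lra. reflexivity.
    + apply is_derive_Reals; apply (derivable_pt_lim_const 0).
  - subst. rewrite (rp_npos (s-1) 0) by lra. rewrite Rmult_0_r.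
    apply is_derive_Reals. intros eps Heps.
    destruct (rp_small (s - 1) ltac:(lra) eps Heps) as [del [Hdel H]].
    exists (mkposreal del Hdel). intros h Hh0 Hh. simpl in Hh.
    rewrite Rplus_0_l, (rp_npos s 0) by lra. rewrite Rminus_0_r, Rminus_0_r.
    unfold rp. destruct (Rlt_dec 0 h) as [Hp|Hp].
    + replace (Rpower h s / h) with (Rpower h (s - 1)).
      * specialize (H h Hh). unfold rp in H. destruct (Rlt_dec 0 h); [exact H| lra].
      * replace s with ((s - 1) + 1) at 2 by ring. rewrite Rpower_plus, Rpower_1 by exact Hp.
        field. lra.
    + unfold Rdiv; rewrite Rmult_0_l, Rabs_R0; exact Heps.
  - rewrite rp_pos_eq by lra.
    apply (is_derive_ext_loc (fun y => Rpower y s)).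
    + apply (locally_R u _ u); [lra|]. intros y Hy.
      apply Rabs_def2 in Hy. rewrite rp_pos_eq by lra. reflexivity.
    + apply is_derive_Reals. apply derivable_pt_lim_power. exact Hu.
Qed.

Lemma eqR (a b : R) : a = b -> a = b.
Proof. auto. Qed.

Lemma exp_le' x y : x <= y -> exp x <= exp y.
Proof. intros [H|H]; [left; apply exp_increasing; exact H| rewrite H; lra]. Qed.

Lemma ln_le_sub1 y : 0 < y -> ln y <= y - 1.
Proof. intros Hy. pose proof (exp_ineq1_le (ln y)). rewrite exp_ln in H by exact Hy. lra. Qed.

Definition gf (s x : R) : R := Rpower x (s - 1) * exp (- x).
Definition gt (s x : R) : R := rp (s - 1) x * exp (- x).

Lemma exp_cont x : continuous exp x.
Proof. apply continuous_exp. Qed.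

Lemma cont_opp x : continuous (fun t => - t) x.
Proof. apply continuity_pt_filterlim. apply (continuity_pt_opp (fun t => t)). apply continuity_pt_id. Qed.
Lemma cont_half x : continuous (fun t => - t / 2) x.
Proof. apply continuity_pt_filterlim. apply (continuity_pt_mult (fun t => - t) (fun _ => / 2)).
  apply (continuity_pt_opp (fun t => t)). apply continuity_pt_id. apply continuity_pt_const. intros a b; reflexivity. Qed.

Lemma gt_cont s x : 1 < s -> continuous (gt s) x.
Proof.
  intros Hs. unfold gt. apply cont_mult.
  - apply rp_cont; lra.
  - apply (cont_comp (fun t => - t) exp). 
    + apply cont_opp.
    + apply exp_cont.
Qed.

Lemma gf_gt s x : 0 < x -> gf s x = gt s x.
Proof. intros; unfold gf, gt; rewrite rp_pos_eq; auto. Qed.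

Lemma gf_nonneg s x : 0 <= gf s x.
Proof. unfold gf. apply Rmult_le_pos; left; [apply Rpower_pos'| apply exp_pos]. Qed.

Lemma gf_exRInt s a b : 1 < s -> 0 <= a -> 0 <= b -> ex_RInt (gf s) a b.
Proof.
  intros Hs Ha Hb. apply (ex_RInt_ext (gt s)).
  - intros x Hx. symmetry. apply gf_gt. assert (0 <= Rmin a b) by (apply Rmin_glb; lra). lra.
  - apply (ex_RInt_continuous (V := R_CompleteNormedModule)). intros; apply gt_cont; exact Hs.
Qed.

Lemma Rpower_exp_bound a x : 0 < a -> 0 < x -> Rpower x a <= Rpower (2 * a) a * exp (x / 2).
Proof.
  intros Ha Hx. unfold Rpower. rewrite <- exp_plus. apply exp_le'.
  assert (H : ln (x / (2 * a)) <= x / (2 * a) - 1) by (apply ln_le_sub1; apply Rdiv_lt_0_compat; lra).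
  rewrite ln_div in H by lra.
  assert (H2 : a * (ln x - ln (2 * a)) <= a * (x / (2 * a))) by (apply Rmult_le_compat_l; lra).
  replace (a * (x / (2 * a))) with (x / 2) in H2 by (field; lra). lra.
Qed.

Lemma int_exp_half K b : RInt (fun x => K * exp (- x / 2)) 0 b = 2 * K - 2 * K * exp (- b / 2).
Proof.
  apply is_RInt_unique.
  replace (2 * K - 2 * K * exp (- b / 2)) with (minus ((fun x => -2 * K * exp (- x / 2)) b) ((fun x => -2 * K * exp (- x / 2)) 0)).
  2:{ simpl. unfold minus, plus, opp; simpl. replace (-0/2) with 0 by field. rewrite exp_0. ring. }
  apply (is_RInt_derive (V := R_CompleteNormedModule) (fun x => -2 * K * exp (- x / 2)) (fun x => K * exp (- x / 2)) 0 b).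
  - intros x _. auto_derive; [auto| apply eqR; unfold Rdiv; field].
  - intros x _. apply cont_mult; [apply cont_const|].
    apply (cont_comp (fun t => - t / 2) exp); [| apply exp_cont].
    apply cont_half.
Qed.

Definition Kb (a : R) : R := Rpower (2 * a) a.

Lemma F_bound s b : 1 < s -> 0 <= b -> RInt (gf s) 0 b <= 2 * Kb (s - 1).
Proof.
  intros Hs Hb.
  apply Rle_trans with (RInt (fun x => Kb (s-1) * exp (- x / 2)) 0 b).
  - apply RInt_le; auto.
    + apply gf_exRInt; lra.
    + apply (ex_RInt_continuous (V := R_CompleteNormedModule)). intros. apply cont_mult; [apply cont_const|].
      apply (cont_comp (fun t => - t / 2) exp); [| apply exp_cont].
      apply cont_half.
    + intros x Hx. unfold gf, Kb.
      replace (exp (- x / 2)) with (exp (x / 2) * exp (- x)).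
      2:{ rewrite <- exp_plus. f_equal. field. }
      rewrite <- Rmult_assoc. apply Rmult_le_compat_r; [left; apply exp_pos|].
      apply Rpower_exp_bound; lra.
  - rewrite int_exp_half. assert (0 < Kb (s - 1)) by apply Rpower_pos'.
    assert (0 < exp (- b / 2)) by apply exp_pos. nra.
Qed.

Lemma F_mono s b1 b2 : 1 < s -> 0 <= b1 <= b2 -> RInt (gf s) 0 b1 <= RInt (gf s) 0 b2.
Proof.
  intros Hs Hb. rewrite <- (RInt_Chasles (gf s) 0 b1 b2).
  - assert (0 <= RInt (gf s) b1 b2). { apply RInt_ge_0; [lra| apply gf_exRInt; lra| intros; apply gf_nonneg]. }
    simpl. unfold plus; simpl. lra.
  - apply gf_exRInt; lra.
  - apply gf_exRInt; lra.
Qed.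

Lemma Gamma_char s : 1 < s ->
  (forall b, 0 <= b -> RInt (gf s) 0 b <= Gamma s) /\
  (forall eps, 0 < eps -> exists M, 0 <= M /\ Gamma s - eps < RInt (gf s) 0 M).
Proof.
  intros Hs.
  set (E := fun y => exists b, 0 <= b /\ y = RInt (gf s) 0 b).
  destruct (completeness E) as [l [Hub Hlub]].
  { exists (2 * Kb (s - 1)). intros y [b [Hb ->]]. apply F_bound; auto. }
  { exists (RInt (gf s) 0 0). exists 0; split; [lra| reflexivity]. }
  assert (Happ : forall eps, 0 < eps -> exists M, 0 <= M /\ l - eps < RInt (gf s) 0 M).
  { intros eps Heps. destruct (classic (exists M, 0 <= M /\ l - eps < RInt (gf s) 0 M)) as [H|H]; [exact H|].
    exfalso. assert (l <= l - eps); [|lra]. apply Hlub. intros y [b [Hb ->]].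
    apply Rnot_lt_le. intro Hlt. apply H. exists b; split; auto. }
  assert (Hup : forall b, 0 <= b -> RInt (gf s) 0 b <= l).
  { intros b Hb. apply Hub. exists b; split; auto. }
  assert (HG : Gamma s = l).
  { unfold Gamma. apply is_RInt_gen_unique.
    unfold is_RInt_gen, filterlimi, filter_le, filtermapi.
    intros P [eps HP].
    destruct (Happ eps (cond_pos eps)) as [M [HM HMl]].
    apply (Filter_prod _ _ _ (fun a => a = 0) (fun b => Rmax M 0 < b)).
    - reflexivity.
    - exists (Rmax M 0); auto.
    - intros a b -> Hb. simpl. exists (RInt (gf s) 0 b). split.
      + apply (RInt_correct (gf s)). apply gf_exRInt; try lra. pose proof (Rmax_r M 0); lra.
      + apply HP. change (Rabs (RInt (gf s) 0 b - l) < eps).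
        assert (RInt (gf s) 0 M <= RInt (gf s) 0 b) by (apply F_mono; auto; split; auto; pose proof (Rmax_l M 0); lra).
        assert (RInt (gf s) 0 b <= l) by (apply Hup; pose proof (Rmax_r M 0); lra).
        apply Rabs_def1; lra. }
  rewrite HG. split; auto.
Qed.

Lemma Rpower_base1 a : Rpower 1 a = 1.
Proof. unfold Rpower. rewrite ln_1, Rmult_0_r. apply exp_0. Qed.

Lemma F2_pos s : 1 < s -> exp (-2) <= RInt (gf s) 0 2.
Proof.
  intros Hs.
  rewrite <- (RInt_Chasles (gf s) 0 1 2); try (apply gf_exRInt; lra).
  assert (H0 : 0 <= RInt (gf s) 0 1) by (apply RInt_ge_0; [lra| apply gf_exRInt; lra| intros; apply gf_nonneg]).
  assert (H1 : RInt (fun _ => exp (-2)) 1 2 <= RInt (gf s) 1 2).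
  { apply RInt_le; [lra| apply ex_RInt_const| apply gf_exRInt; lra|].
    intros x Hx. unfold gf. rewrite <- (Rmult_1_l (exp (-2))).
    apply Rmult_le_compat; [lra| left; apply exp_pos| |].
    - apply Rle_trans with (Rpower 1 (s - 1)); [rewrite Rpower_base1; lra| apply Rpower_le_base; lra].
    - apply exp_le'. lra. }
  rewrite RInt_const in H1. simpl in *. unfold plus, scal in *; simpl in *. unfold mult in *; simpl in *. lra.
Qed.

Lemma F_pos s b : 1 < s -> 2 <= b -> exp (-2) <= RInt (gf s) 0 b.
Proof. intros Hs Hb. apply Rle_trans with (RInt (gf s) 0 2). apply F2_pos; exact Hs. apply F_mono; [exact Hs| split; lra]. Qed.

Lemma Gamma_pos s : 1 < s -> exp (-2) <= Gamma s.
Proof. intros Hs. apply Rle_trans with (RInt (gf s) 0 2). apply F2_pos; exact Hs. apply (proj1 (Gamma_char s Hs)); lra. Qed.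

Lemma Gamma_le_of s S : 1 < s -> (forall b, 0 <= b -> RInt (gf s) 0 b <= S) -> Gamma s <= S.
Proof.
  intros Hs H. destruct (Gamma_char s Hs) as [_ Happ].
  apply Rnot_lt_le. intro Hlt. destruct (Happ (Gamma s - S) ltac:(lra)) as [M [HM HMl]].
  specialize (H M HM). lra.
Qed.

Lemma RInt_lin2 (f g : R -> R) a b lo hi : ex_RInt f lo hi -> ex_RInt g lo hi ->
  RInt (fun t => a * f t + b * g t) lo hi = a * RInt f lo hi + b * RInt g lo hi.
Proof.
  intros Hf Hg. apply is_RInt_unique.
  apply (is_RInt_plus (V := R_NormedModule) (fun t => scal a (f t)) (fun t => scal b (g t)));
  apply (is_RInt_scal (V := R_NormedModule)); apply (RInt_correct (V := R_CompleteNormedModule)); auto.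
Qed.

Lemma RInt_lin3 (f g h : R -> R) a b lo hi : ex_RInt f lo hi -> ex_RInt g lo hi -> ex_RInt h lo hi ->
  RInt (fun t => a * f t + b * g t + h t) lo hi = a * RInt f lo hi + b * RInt g lo hi + RInt h lo hi.
Proof.
  intros Hf Hg Hh. apply is_RInt_unique.
  apply (is_RInt_plus (V := R_NormedModule) (fun t => a * f t + b * g t) h).
  - apply (is_RInt_plus (V := R_NormedModule) (fun t => scal a (f t)) (fun t => scal b (g t)));
    apply (is_RInt_scal (V := R_NormedModule)); apply (RInt_correct (V := R_CompleteNormedModule)); auto.
  - apply (RInt_correct (V := R_CompleteNormedModule)); auto.
Qed.

Lemma quad_F x b lam : 3/2 < x -> 0 <= b ->
  0 <= lam ^ 2 * RInt (gf (x - 1/2)) 0 b + (-2 * lam) * RInt (gf x) 0 b + RInt (gf (x + 1/2)) 0 b.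
Proof.
  intros Hx Hb.
  rewrite <- RInt_lin3; try (apply gf_exRInt; lra).
  apply RInt_ge_0; [lra| |].
  - apply (ex_RInt_plus (V:=R_NormedModule) (fun t => lam^2 * gf (x-1/2) t + -2*lam*gf x t) (gf (x+1/2))).
    + apply (ex_RInt_plus (V:=R_NormedModule) (fun t => scal (lam^2) (gf (x-1/2) t)) (fun t => scal (-2*lam) (gf x t)));
      apply (ex_RInt_scal (V:=R_NormedModule)); apply gf_exRInt; lra.
    + apply gf_exRInt; lra.
  - intros t Ht. unfold gf.
    set (P := Rpower t ((x - 1/2 - 1) / 2)). set (Q := Rpower t ((x + 1/2 - 1) / 2)).
    assert (E1 : Rpower t (x - 1/2 - 1) = P * P).
    { unfold P. rewrite <- Rpower_plus. f_equal. field. }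
    assert (E2 : Rpower t (x - 1) = P * Q).
    { unfold P, Q. rewrite <- Rpower_plus. f_equal. field. }
    assert (E3 : Rpower t (x + 1/2 - 1) = Q * Q).
    { unfold Q. rewrite <- Rpower_plus. f_equal. field. }
    rewrite E1, E2, E3. pose proof (exp_pos (- t)).
    replace (lam ^ 2 * (P * P * exp (- t)) + -2 * lam * (P * Q * exp (- t)) + Q * Q * exp (- t))
      with (exp (- t) * ((lam * P - Q) ^ 2)) by ring.
    apply Rmult_le_pos; [lra| apply pow2_ge_0].
Qed.

Lemma Gamma_CS x : 3/2 < x -> Gamma x ^ 2 <= Gamma (x - 1/2) * Gamma (x + 1/2).
Proof.
  intros Hx.
  set (GA := Gamma (x - 1/2)). set (GC := Gamma (x + 1/2)).
  assert (HA := Gamma_char (x - 1/2) ltac:(lra)). assert (HC := Gamma_char (x + 1/2) ltac:(lra)).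
  assert (HGA : exp (-2) <= GA) by (apply Gamma_pos; lra).
  assert (HGC : exp (-2) <= GC) by (apply Gamma_pos; lra).
  assert (He := exp_pos (-2)).
  assert (Hb2 : forall b, 2 <= b -> RInt (gf x) 0 b ^ 2 <= GA * GC).
  { intros b Hb.
    set (FA := RInt (gf (x - 1/2)) 0 b). set (FB := RInt (gf x) 0 b). set (FC := RInt (gf (x + 1/2)) 0 b).
    assert (HFA : exp (-2) <= FA) by (apply F_pos; lra).
    assert (HFC : 0 <= FC) by (apply RInt_ge_0; [lra| apply gf_exRInt; lra| intros; apply gf_nonneg]).
    assert (Hq := quad_F x b (FB / FA) Hx ltac:(lra)). fold FA FB FC in Hq.
    assert (Hq2 : FB ^ 2 <= FA * FC).
    { replace ((FB / FA) ^ 2 * FA + -2 * (FB / FA) * FB + FC) with ((FA * FC - FB ^ 2) / FA) in Hq by (field; lra).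
      assert (0 <= FA * FC - FB ^ 2); [|lra].
      apply (Rmult_le_reg_r (/ FA)); [apply Rinv_0_lt_compat; lra|]. rewrite Rmult_0_l. exact Hq. }
    assert (FA <= GA) by (apply (proj1 HA); lra).
    assert (FC <= GC) by (apply (proj1 HC); lra).
    apply Rle_trans with (FA * FC); [exact Hq2|]. apply Rmult_le_compat; lra. }
  assert (HB : Gamma x <= sqrt (GA * GC)).
  { apply Gamma_le_of; [lra|]. intros b Hb.
    apply Rle_trans with (RInt (gf x) 0 (Rmax b 2)).
    - apply F_mono; [lra| split; [lra| apply Rmax_l]].
    - assert (0 <= RInt (gf x) 0 (Rmax b 2)) by (apply RInt_ge_0; [pose proof (Rmax_r b 2); lra| apply gf_exRInt; try lra; pose proof (Rmax_r b 2); lra| intros; apply gf_nonneg]).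
      rewrite <- (sqrt_pow2 (RInt (gf x) 0 (Rmax b 2))) by lra.
      apply sqrt_le_1_alt. apply Hb2. apply Rmax_r. }
  assert (0 <= Gamma x) by (pose proof (Gamma_pos x ltac:(lra)); lra).
  assert (Hs : sqrt (GA * GC) ^ 2 = GA * GC) by (rewrite <- Rsqr_pow2; apply Rsqr_sqrt; nra).
  rewrite <- Hs. apply pow_incr. lra.
Qed.

Lemma dG_derive s t : 1 < s ->
  is_derive (fun u => - (rp s u * exp (- u))) t (rp s t * exp (- t) - s * (rp (s - 1) t * exp (- t))).
Proof.
  intros Hs.
  assert (H1 := rp_derive s t Hs).
  assert (H2 : is_derive (fun u => exp (- u)) t (- exp (- t))) by (auto_derive; [auto| apply eqR; ring]).
  apply is_derive_Reals in H1. apply is_derive_Reals in H2. apply is_derive_Reals.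
  replace (rp s t * exp (- t) - s * (rp (s - 1) t * exp (- t)))
    with (- (s * rp (s - 1) t * exp (- t) + rp s t * (- exp (- t)))) by ring.
  apply (derivable_pt_lim_opp (fun u => rp s u * exp (- u))).
  apply (derivable_pt_lim_mult (rp s) (fun u => exp (- u))); assumption.
Qed.

Lemma F_FE s b : 1 < s -> 0 < b ->
  RInt (gf (s + 1)) 0 b = s * RInt (gf s) 0 b - Rpower b s * exp (- b).
Proof.
  intros Hs Hb.
  assert (HI : is_RInt (fun t => rp s t * exp (- t) - s * (rp (s - 1) t * exp (- t))) 0 b
                (- (Rpower b s * exp (- b)))).
  { replace (- (Rpower b s * exp (- b))) with
      (minus ((fun u => - (rp s u * exp (- u))) b) ((fun u => - (rp s u * exp (- u))) 0)).
    2:{ simpl. rewrite rp_pos_eq by lra. rewrite (rp_npos s 0) by lra. unfold minus, plus, opp; simpl. ring. }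
    apply (is_RInt_derive (V := R_CompleteNormedModule) (fun u => - (rp s u * exp (- u)))).
    - intros; apply dG_derive; exact Hs.
    - intros x _. apply cont_plus.
      + apply cont_mult; [apply rp_cont; lra|]. apply (cont_comp (fun t => - t) exp); [apply cont_opp| apply exp_cont].
      + apply (continuous_ext (fun t => (-1) * (s * (rp (s - 1) t * exp (- t))))); [intro; apply eqR; ring|].
        apply cont_mult; [apply cont_const|]. apply cont_mult; [apply cont_const|].
        apply cont_mult; [apply rp_cont; lra|]. apply (cont_comp (fun t => - t) exp); [apply cont_opp| apply exp_cont]. }
  apply (is_RInt_unique (V:=R_CompleteNormedModule)) in HI.
  rewrite (RInt_ext _ (fun t => 1 * gf (s + 1) t + (- s) * gf s t)) in HI.
  2:{ intros x Hx. rewrite Rmin_left in Hx by lra. rewrite Rmax_right in Hx by lra.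
      unfold gf. rewrite !rp_pos_eq by lra. replace (s + 1 - 1) with s by ring. apply eqR; ring. }
  rewrite RInt_lin2 in HI by (apply gf_exRInt; lra). lra.
Qed.

Lemma Gamma_FE s : 1 < s -> s * Gamma s <= Gamma (s + 1).
Proof.
  intros Hs.
  destruct (Gamma_char s Hs) as [Hup Happ].
  destruct (Gamma_char (s + 1) ltac:(lra)) as [Hup1 _].
  apply Rnot_lt_le. intro Hlt.
  set (eta := s * Gamma s - Gamma (s + 1)).
  assert (Heta : 0 < eta) by (unfold eta; lra).
  destruct (Happ (eta / (2 * s)) ltac:(apply Rdiv_lt_0_compat; lra)) as [M [HM HMl]].
  set (K := Kb s). assert (HK : 0 < K) by apply Rpower_pos'.
  set (T := -2 * ln (eta / (2 * K))).
  set (b := Rmax (Rmax M 1) (T + 1)).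
  assert (Hb1 : 1 <= b) by (unfold b; pose proof (Rmax_l (Rmax M 1) (T+1)); pose proof (Rmax_r M 1); lra).
  assert (HbM : M <= b) by (unfold b; pose proof (Rmax_l (Rmax M 1) (T+1)); pose proof (Rmax_l M 1); lra).
  assert (HbT : T + 1 <= b) by (unfold b; apply Rmax_r).
  assert (HF : RInt (gf s) 0 M <= RInt (gf s) 0 b) by (apply F_mono; lra).
  assert (Hbd : Rpower b s * exp (- b) < eta / 2).
  { apply Rle_lt_trans with (K * exp (- b / 2)).
    - apply Rle_trans with (K * exp (b / 2) * exp (- b)).
      + apply Rmult_le_compat_r; [left; apply exp_pos|]. unfold K, Kb. apply Rpower_exp_bound; lra.
      + right. rewrite Rmult_assoc, <- exp_plus. f_equal. f_equal. field.
    - assert (exp (- b / 2) < eta / (2 * K)).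
      { rewrite <- (exp_ln (eta / (2 * K))) by (apply Rdiv_lt_0_compat; lra).
        apply exp_increasing. unfold T in HbT. lra. }
      apply (Rmult_lt_compat_l K) in H; [|exact HK].
      replace (K * (eta / (2 * K))) with (eta / 2) in H by (field; lra). exact H. }
  assert (HFE := F_FE s b Hs ltac:(lra)).
  assert (Hb' := Hup1 b ltac:(lra)).
  assert (s * (Gamma s - eta / (2 * s)) < s * RInt (gf s) 0 b) by (apply Rmult_lt_compat_l; lra).
  replace (s * (Gamma s - eta / (2 * s))) with (s * Gamma s - eta / 2) in H by (field; lra).
  unfold eta in *. lra.
Qed.

Lemma Gamma_ratio x : 3/2 < x -> sqrt (x - 1/2) * Gamma x <= Gamma (x + 1/2).
Proof.
  intros Hx.
  assert (HFE := Gamma_FE (x - 1/2) ltac:(lra)).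
  replace (x - 1/2 + 1) with (x + 1/2) in HFE by field.
  assert (HCS := Gamma_CS x Hx).
  assert (HA := Gamma_pos (x - 1/2) ltac:(lra)).
  assert (HB := Gamma_pos x ltac:(lra)).
  assert (HC := Gamma_pos (x + 1/2) ltac:(lra)).
  assert (He := exp_pos (-2)).
  set (A := x - 1/2) in *.
  assert (Hsq : sqrt A * sqrt A = A) by (apply sqrt_sqrt; unfold A; lra).
  assert (0 <= sqrt A) by apply sqrt_pos.
  assert (H2 : (sqrt A * Gamma x) ^ 2 <= Gamma (x + 1/2) ^ 2).
  { assert (E : (sqrt A * Gamma x) ^ 2 = A * Gamma x ^ 2)
      by (replace ((sqrt A * Gamma x) ^ 2) with ((sqrt A * sqrt A) * Gamma x ^ 2) by ring; rewrite Hsq; reflexivity).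
    rewrite E.
    apply Rle_trans with (A * (Gamma A * Gamma (x + 1/2))).
    - apply Rmult_le_compat_l; [unfold A; lra| exact HCS].
    - replace (Gamma (x + 1/2) ^ 2) with (Gamma (x + 1/2) * Gamma (x + 1/2)) by ring.
      rewrite <- Rmult_assoc. apply Rmult_le_compat_r; lra. }
  nra.
Qed.

Lemma psi_on_J n j y : (1 <= j <= n)%nat -> INR j - 3/4 <= INR n * y <= INR j - 1/4 ->
  1/2 <= (-1)^(j+n) * psi n y.
Proof.
  intros Hj Hy.
  assert (HN : INR j <= INR n) by (apply le_INR; lia).
  assert (Hj1 : 1 <= INR j) by (apply (le_INR 1); lia).
  assert (Hn0 : 0 < INR n) by lra.
  assert (Hy0 : 0 <= y <= 1).
  { split.
    - apply (Rmult_le_reg_l (INR n)); lra.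
    - apply (Rmult_le_reg_l (INR n)); lra. }
  destruct (Rle_dec (INR n * y) (INR j - 1/2)) as [Hc|Hc].
  - destruct j as [|j']; [lia|].
    rewrite (psi_formula n j' y) by (try lia; try lra; rewrite S_INR in *; lra).
    rewrite S_INR in *.
    replace ((-1) ^ (S j' + n)) with (- (-1)^(j' + n)) by (simpl; ring).
    replace (- (-1) ^ (j' + n) * ((-1) ^ (j' + n) * (2 * (INR j' - INR n * y))))
      with (- ((-1) ^ (j' + n) * (-1) ^ (j' + n)) * (2 * (INR j' - INR n * y))) by ring.
    rewrite pow_m1_sq. lra.
  - rewrite (psi_formula n j y) by (try lia; try lra).
    rewrite <- Rmult_assoc, pow_m1_sq. lra.
Qed.

Lemma m1_pow_cases k : (-1)^k = 1 \/ (-1)^k = -1.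
Proof. induction k; simpl; [left; reflexivity|]. destruct IHk as [->| ->]; [right|left]; ring. Qed.

Lemma sum_ind_bc (P : nat -> Prop) (kap : R) n :
  sum1 (fun j => (if excluded_middle_informative (P j) then 1 else 0) * kap) n = INR (bc P n) * kap.
Proof.
  induction n; simpl sum1; [simpl; ring|]. rewrite IHn. simpl bc.
  destruct (excluded_middle_informative (P (S n))); rewrite plus_INR; simpl; ring.
Qed.

Lemma rpow_lower D t : 5 <= D -> 0 <= t -> t * t <= 1 / D ->
  exp (-1) <= rp ((D - 3) / 2) (1 - t ^ 2).
Proof.
  intros HD Ht Htt.
  assert (Hq : 0 < 1 - 1 / D). { assert (1/D < 1) by (apply (Rmult_lt_reg_l D); [lra| field_simplify; lra]). lra. }
  assert (H1 : 1 - 1/D <= 1 - t^2) by (simpl; lra).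
  rewrite rp_pos_eq by lra.
  apply Rle_trans with (Rpower (1 - 1/D) ((D - 3) / 2)).
  2:{ apply Rpower_le_base; lra. }
  unfold Rpower. apply exp_le'.
  assert (Hl : ln (/ (1 - 1/D)) <= / (1 - 1/D) - 1) by (apply ln_le_sub1; apply Rinv_0_lt_compat; lra).
  rewrite ln_Rinv in Hl by lra.
  replace (/ (1 - 1/D) - 1) with (1 / (D - 1)) in Hl by (field; lra).
  assert (Hx : (D - 3) / 2 * (- (1 / (D - 1))) >= -1).
  { replace ((D - 3) / 2 * (- (1 / (D - 1)))) with (- ((D - 3) / (2 * (D - 1)))) by (field; lra).
    assert ((D - 3) / (2 * (D - 1)) <= 1); [|lra].
    apply (Rmult_le_reg_l (2 * (D - 1))); [lra|]. field_simplify; lra. }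
  assert (Hm : (D - 3) / 2 * (- (1 / (D - 1))) <= (D - 3) / 2 * ln (1 - 1 / D)).
  { apply Rmult_le_compat_l; lra. }
  lra.
Qed.

Lemma sum1_le f g n : (forall j, (1 <= j <= n)%nat -> f j <= g j) -> sum1 f n <= sum1 g n.
Proof. induction n; intros H; simpl; [lra|]. apply Rplus_le_compat; [apply IHn; intros; apply H; lia| apply H; lia]. Qed.

Lemma cont_minus (f g : R -> R) x : continuous f x -> continuous g x -> continuous (fun t => f t - g t) x.
Proof. intros. apply cont_plus; auto. apply (cont_comp g (fun u => - u)); auto. apply cont_opp. Qed.

Lemma RInt_3split (H : R -> R) a lo hi b : (forall u v, ex_RInt H u v) -> (forall t, 0 <= H t) ->
  a <= lo -> lo <= hi -> hi <= b -> RInt H lo hi <= RInt H a b.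
Proof.
  intros Hex H0 H1 H2 H3.
  rewrite <- (RInt_Chasles H a lo b) by auto. rewrite <- (RInt_Chasles H lo hi b) by auto.
  assert (0 <= RInt H a lo) by (apply RInt_ge_0; auto).
  assert (0 <= RInt H hi b) by (apply RInt_ge_0; auto).
  simpl; unfold plus; simpl. lra.
Qed.

Lemma main_bound d c : (8 <= d)%nat ->
  1 / (5 * exp 1 * PI) <= L2norm d (fun t => psi (3 * d) (sqrt (INR d) * t) - peval c (2 * d) t).
Proof.
  intros Hd.
  assert (HD : 8 <= INR d). { replace 8 with (INR 8) by (simpl; lra). apply le_INR; lia. }
  set (D := INR d) in *.
  set (s := sqrt D).
  assert (Hss : s * s = D) by (apply sqrt_sqrt; lra).
  assert (Hs1 : 1 <= s) by (unfold s; rewrite <- sqrt_1; apply sqrt_le_1_alt; lra).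
  set (n := (3 * d)%nat).
  assert (HN : INR n = 3 * D) by (unfold n, D; rewrite mult_INR; simpl; ring).
  set (N := INR n) in *.
  set (p := peval c (2 * d)).
  set (g := fun t => psi n (s * t)).
  set (K := Gamma (D / 2) / (sqrt PI * Gamma ((D - 1) / 2))).
  assert (HPI : 3 < PI) by (pose proof PI2_3_2; lra).
  assert (HsP : 0 < sqrt PI) by (apply sqrt_lt_R0; lra).
  assert (HK : s / (2 * sqrt PI) <= K).
  { assert (Hr := Gamma_ratio ((D - 1) / 2) ltac:(lra)).
    replace ((D - 1) / 2 + 1 / 2) with (D / 2) in Hr by field.
    assert (HGB := Gamma_pos ((D - 1) / 2) ltac:(lra)). assert (He := exp_pos (-2)).
    assert (Hsq : s / 2 <= sqrt ((D - 1) / 2 - 1 / 2)).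
    { rewrite <- (sqrt_pow2 (s / 2)) by lra. apply sqrt_le_1_alt.
      replace ((s / 2) ^ 2) with (s * s / 4) by field. rewrite Hss. lra. }
    unfold K. apply (Rmult_le_reg_r (sqrt PI * Gamma ((D - 1) / 2))); [apply Rmult_lt_0_compat; lra|].
    replace (Gamma (D / 2) / (sqrt PI * Gamma ((D - 1) / 2)) * (sqrt PI * Gamma ((D - 1) / 2)))
      with (Gamma (D / 2)) by (field; lra).
    replace (s / (2 * sqrt PI) * (sqrt PI * Gamma ((D - 1) / 2))) with (s / 2 * Gamma ((D - 1) / 2)) by (field; lra).
    eapply Rle_trans; [| exact Hr]. apply Rmult_le_compat_r; lra. }
  assert (HK0 : 0 < K) by (apply Rlt_le_trans with (s / (2 * sqrt PI)); [apply Rdiv_lt_0_compat; lra| exact HK]).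
  set (al := (D - 3) / 2).
  set (H := fun t => (g t - p t) ^ 2 * (K * rp al (1 - t ^ 2))).
  assert (HHc : forall t, continuous H t).
  { intro t. unfold H. apply cont_mult.
    - apply (cont_comp (fun t => g t - p t) (fun u => u ^ 2)); [| apply pow_cont].
      apply cont_minus.
      + unfold g. apply (cont_comp (fun t => s * t) (psi n)); [| apply psi_cont].
        apply cont_mult; [apply cont_const| apply cont_id].
      + apply peval_cont.
    - apply cont_mult; [apply cont_const|].
      apply (cont_comp (fun t => 1 - t ^ 2) (rp al)); [| apply rp_cont; unfold al; lra].
      apply cont_minus; [apply cont_const| apply pow_cont]. }
  assert (HH0 : forall t, 0 <= H t).
  { intro t. unfold H. apply Rmult_le_pos; [apply pow2_ge_0|]. apply Rmult_le_pos; [lra| apply rp_nonneg]. }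
  assert (Hex : forall u v, ex_RInt H u v).
  { intros u v. apply (ex_RInt_continuous (V := R_CompleteNormedModule)). intros; apply HHc. }
  unfold L2norm.
  rewrite (RInt_ext _ H).
  2:{ intros t Ht. rewrite Rmin_left in Ht by lra. rewrite Rmax_right in Ht by lra.
      unfold H, mu_density, g, p, al, K. rewrite rp_pos_eq by (simpl; nra). reflexivity. }
  set (lo := fun j : nat => (INR j - 3/4) / (N * s)).
  set (hi := fun j : nat => (INR j - 1/4) / (N * s)).
  set (sg := fun j : nat => (-1) ^ (j + n)).
  set (B := badp p lo hi sg).
  set (kap := (1 / (2 * N * s)) * (K * exp (-1) / 4)).
  assert (HNs : 0 < N * s) by nra.
  set (cell := fun j : nat => RInt H ((INR j - 1) / (N * s)) (INR j / (N * s))).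
  assert (Hcell : forall j, (1 <= j <= n)%nat ->
            (if excluded_middle_informative (B j) then 1 else 0) * kap <= cell j).
  { intros j Hj.
    assert (Hj1 : 1 <= INR j) by (apply (le_INR 1); lia).
    assert (HjN : INR j <= N) by (apply le_INR; lia).
    assert (Hsub : RInt H (lo j) (hi j) <= cell j).
    { apply RInt_3split; auto; unfold lo, hi; unfold Rdiv; apply Rmult_le_compat_r;
        try (left; apply Rinv_0_lt_compat; exact HNs); lra. }
    destruct (excluded_middle_informative (B j)) as [Hb|Hb].
    - rewrite Rmult_1_l. eapply Rle_trans; [| exact Hsub].
      assert (Hc : RInt (fun _ => K * exp (-1) / 4) (lo j) (hi j) <= RInt H (lo j) (hi j)).
      { apply RInt_le; [unfold lo, hi; unfold Rdiv; apply Rmult_le_compat_r; [left; apply Rinv_0_lt_compat; exact HNs| lra]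
                       | apply ex_RInt_const| apply Hex|].
        intros t Ht.
        assert (Hlot : 0 < t).
        { apply Rlt_le_trans with (lo j); [| lra]. unfold lo. apply Rdiv_lt_0_compat; lra. }
        assert (HNy : INR j - 3/4 <= N * (s * t) <= INR j - 1/4).
        { split.
          - apply Rle_trans with (N * s * lo j); [unfold lo; right; field; lra|].
            rewrite <- Rmult_assoc. apply Rmult_le_compat_l; lra.
          - apply Rle_trans with (N * s * hi j); [| unfold hi; right; field; lra].
            rewrite <- Rmult_assoc. apply Rmult_le_compat_l; lra. }
        assert (Hg := psi_on_J n j (s * t) ltac:(lia) HNy).
        assert (Hp : sg j * p t <= 0) by (apply Hb; lra).
        assert (Hsg2 : sg j * sg j = 1) by (unfold sg; apply pow_m1_sq).
        assert (Hgp : 1/2 <= sg j * (g t - p t)) by (rewrite Rmult_minus_distr_l; unfold g, sg in *; lra).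
        assert (Hsq : 1/4 <= (g t - p t) ^ 2).
        { replace ((g t - p t) ^ 2) with ((sg j * (g t - p t)) ^ 2)
            by (replace ((sg j * (g t - p t)) ^ 2) with ((sg j * sg j) * (g t - p t) ^ 2) by ring; rewrite Hsg2; ring).
          nra. }
        assert (Ht1 : t <= 1 / s).
        { apply Rle_trans with (hi j); [lra|]. unfold hi.
          apply (Rmult_le_reg_l (N * s)); [exact HNs|]. field_simplify; try lra. }
        assert (Hden : exp (-1) <= rp al (1 - t ^ 2)).
        { apply rpow_lower; [lra| lra|].
          apply Rle_trans with ((1 / s) * (1 / s)); [apply Rmult_le_compat; lra|].
          right. rewrite <- Hss. field. lra. }
        unfold H. assert (He1 := exp_pos (-1)).
        apply Rle_trans with (1/4 * (K * exp (-1))); [lra|].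
        apply Rmult_le_compat; [lra| apply Rmult_le_pos; lra| exact Hsq| apply Rmult_le_compat_l; lra]. }
      rewrite RInt_const in Hc. simpl in Hc. unfold scal in Hc; simpl in Hc; unfold mult in Hc; simpl in Hc.
      unfold kap. eapply Rle_trans; [| exact Hc]. right. unfold lo, hi. field. lra.
    - rewrite Rmult_0_l. eapply Rle_trans; [| exact Hsub]. apply RInt_ge_0; auto.
      unfold lo, hi; unfold Rdiv; apply Rmult_le_compat_r; [left; apply Rinv_0_lt_compat; exact HNs| lra]. }
  assert (Hsum : forall m, RInt H 0 (INR m / (N * s)) = sum1 cell m).
  { induction m.
    - simpl. unfold Rdiv; rewrite Rmult_0_l. apply (RInt_point (V := R_CompleteNormedModule)).
    - simpl sum1. rewrite <- IHm. unfold cell.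
      replace ((INR (S m) - 1) / (N * s)) with (INR m / (N * s)) by (rewrite S_INR; field; lra).
      rewrite <- (RInt_Chasles H 0 (INR m / (N * s))) by auto. reflexivity. }
  assert (Hpart : RInt H 0 (1 / s) <= RInt H (-1) 1).
  { apply RInt_3split; auto; try lra.
    - left; apply Rdiv_lt_0_compat; lra.
    - apply (Rmult_le_reg_l s); [lra|]. field_simplify; lra. }
  assert (Hcomb := comb p (peval_cont c (2 * d)) (2 * d - 1) n lo hi sg).
  assert (Hbc : (n <= 2 * bc B n + (2 * d - 1) + 1)%nat).
  { apply Hcomb.
    - intro j. unfold lo, hi, Rdiv. apply Rmult_le_compat_r; [left; apply Rinv_0_lt_compat; exact HNs| lra].
    - intro j. unfold lo, hi, Rdiv. rewrite S_INR. apply Rmult_lt_compat_r; [apply Rinv_0_lt_compat; exact HNs| lra].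
    - intro j. unfold sg. simpl. ring.
    - intro j. unfold sg. apply m1_pow_cases.
    - intros l Hl Hr [x Hx].
      destruct (Nat.le_gt_cases (2 * d) (length l)) as [Hle|Hlt]; [|lia].
      exfalso. apply Hx. apply (poly_roots (2 * d) c l Hl Hr Hle). }
  assert (Hbc2 : D <= 2 * INR (bc B n)).
  { assert (d <= 2 * bc B n)%nat by (assert (n = 3 * d)%nat by reflexivity; lia).
    unfold D. replace 2 with (INR 2) by reflexivity. rewrite <- mult_INR. apply le_INR. exact H0. }
  assert (Hmain : INR (bc B n) * kap <= RInt H (-1) 1).
  { rewrite <- sum_ind_bc. eapply Rle_trans; [apply sum1_le; exact Hcell|].
    rewrite <- Hsum. replace (INR n / (N * s)) with (1 / s) by (fold N; field; lra). exact Hpart. }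
  assert (He2 : 2 <= exp 1) by (pose proof (exp_ineq1_le 1); lra).
  set (E := exp 1) in *.
  assert (Hem1 : exp (-1) = 1 / E).
  { assert (Hx : exp (-1) * E = 1). { unfold E. rewrite <- exp_plus. replace (-1 + 1) with 0 by ring. apply exp_0. }
    assert (0 < E) by (unfold E; apply exp_pos).
    apply (Rmult_eq_reg_r E); [| lra]. rewrite Hx. field. lra. }
  set (r := sqrt PI) in *.
  assert (Hr2 : r * r = PI) by (apply sqrt_sqrt; lra).
  assert (HrP : r <= PI) by nra.
  assert (HE0 : 0 < E) by lra.
  assert (Hr0 : 0 < r) by lra.
  assert (Hkap : 1 / (96 * r * E) <= INR (bc B n) * kap).
  { assert (Hkap0 : 0 <= kap).
    { unfold kap. rewrite Hem1. apply Rmult_le_pos; [left; apply Rdiv_lt_0_compat; nra|].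
      unfold Rdiv. apply Rmult_le_pos; [|lra]. apply Rmult_le_pos; [lra|]. rewrite Rmult_1_l. left; apply Rinv_0_lt_compat; lra. }
    assert (E1 : (D / 2) * kap = K / (48 * s * E)) by (unfold kap; rewrite Hem1, HN; field; repeat split; lra).
    assert (E2 : 1 / (96 * r * E) = (s / (2 * r)) / (48 * s * E)) by (field; repeat split; lra).
    rewrite E2. apply Rle_trans with ((D / 2) * kap).
    - rewrite E1. unfold Rdiv at 1 3. apply Rmult_le_compat_r; [left; apply Rinv_0_lt_compat; nra| exact HK].
    - apply Rmult_le_compat_r; lra. }
  assert (Hnum : (1 / (5 * E * PI)) ^ 2 <= 1 / (96 * r * E)).
  { replace ((1 / (5 * E * PI)) ^ 2) with (1 / (25 * E ^ 2 * PI ^ 2)) by (field; lra).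
    unfold Rdiv. rewrite !Rmult_1_l. apply Rinv_le_contravar; [nra|].
    assert (h0 : 150 <= 25 * E * PI) by nra.
    assert (h2 : 96 * r <= 25 * E * PI * PI) by nra.
    assert (h3 : 96 * r * E <= 25 * E * PI * PI * E) by (apply Rmult_le_compat_r; lra).
    replace (25 * E ^ 2 * PI ^ 2) with (25 * E * PI * PI * E) by ring. exact h3. }
  rewrite <- (sqrt_pow2 (1 / (5 * E * PI))) by (left; apply Rdiv_lt_0_compat; nra).
  apply sqrt_le_1_alt. lra.
Qed.

Theorem lemma9 :
  exists d0 : nat, forall d : nat, (d0 <= d)%nat ->
    Rbar_le (Finite (1 / (5 * exp 1 * PI)))
            (A d (2 * d) (fun t => psi (3 * d) (sqrt (INR d) * t))).
Proof.
  exists 8%nat. intros d Hd. unfold A.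
  destruct (Glb_Rbar_correct (fun r => exists c : nat -> R,
     r = L2norm d (fun t => psi (3 * d) (sqrt (INR d) * t) - peval c (2 * d) t))) as [_ Hglb].
  apply Hglb. intros r [c ->]. simpl. apply main_bound. exact Hd.
Qed.
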